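(* For any $\alpha>0$, integers $n,m$ with $m>n$, $n$ dividing $m$ and $m/n>2$, and $k$ with $n\le k\le m$, there exists a full rank matrix $X\in\mathbb{R}^{n\times m}$ such that for every subset $\mathcal S\subseteq[m]$ of cardinality $k$ with $\mathrm{rank}(X_{\mathcal S})=n$, $$\|X_{\mathcal S}^{\dagger}\|_F^2\ge\Big(\frac{m-k}{k+\alpha^2}+1-\frac{k}{n}\Big)\|X^{\dagger}\|_F^2 .$$
   Context: $[m]=\{1,\dots,m\}$; $X_{\mathcal S}$ is the submatrix of columns of $X$ indexed by $\mathcal S$; $A^\dagger$ is the Moore–Penrose pseudo-inverse; $\|\cdot\|_F$ is the Frobenius norm. *)

(* Defs.v *)
From HB Require Import structures.
From mathcomp Require Import all_boot all_order all_algebra.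
From mathcomp Require Import boolp classical_sets reals.
Set Implicit Arguments. Unset Strict Implicit. Unset Printing Implicit Defensive.
Import Order.TTheory GRing.Theory Num.Theory.
Local Open Scope ring_scope.

Definition penrose (R : realType) (p q : nat)
    (A : 'M[R]_(p, q)) (B : 'M[R]_(q, p)) : Prop :=
  [/\ A *m B *m A = A, B *m A *m B = B,
      (A *m B)^T = A *m B & (B *m A)^T = B *m A].

Definition pinv (R : realType) (p q : nat) (A : 'M[R]_(p, q)) : 'M[R]_(q, p) :=
  xget 0 [set B | penrose A B].

Definition frob (R : realType) (p q : nat) (A : 'M[R]_(p, q)) : R :=
  Num.sqrt (\sum_(i < p) \sum_(j < q) A i j ^+ 2).

(* X_S : the columns of X indexed by S (in increasing order of index). *)
Definition colsubset (R : realType) (n m : nat) (X : 'M[R]_(n, m))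
    (S : {set 'I_m}) : 'M[R]_(n, #|S|) :=
  colsub (fun j : 'I_#|S| => enum_val j) X.

(* Main.v *)
Require Import Defs.
From HB Require Import structures.
From mathcomp Require Import all_boot all_order all_algebra.
From mathcomp Require Import boolp classical_sets reals.
Import Order.TTheory GRing.Theory Num.Theory.
Local Open Scope ring_scope.
Set Implicit Arguments. Unset Strict Implicit.
From mathcomp Require Import ring lra.

Section Aux.
Variable R : realType.

Lemma sq_zero a b (N : 'M[R]_(a,b)) : N *m N^T = 0 -> N = 0.
Proof.
move=> H; apply/matrixP => i j.
have := congr1 (fun M : 'M_a => M i i) H; rewrite !mxE => H1.
have hp : forall l, predT l -> 0 <= N i l * N^T l i.
  by move=> l _; rewrite mxE -expr2 sqr_ge0.
have := psumr_eq0P hp H1 (i:=j) isT.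
rewrite mxE -expr2 => h; apply/eqP; by rewrite -sqrf_eq0 h.
Qed.

Lemma AAT_unit n q (A : 'M[R]_(n,q)) : \rank A = n -> A *m A^T \in unitmx.
Proof.
move=> rA; rewrite -row_free_unit -kermx_eq0.
set K := kermx _.
have HK := mulmx_ker (A *m A^T).
have H0 : (K *m A) *m (K *m A)^T = 0.
  by rewrite trmx_mul mulmxA -(mulmxA K A) HK mul0mx.
have := @sq_zero _ _ (K *m A) H0 => /eqP.
have fA : row_free A by rewrite /row_free rA.
by rewrite (mulmx_free_eq0 _ fA).
Qed.

Lemma penrose_ex n q (A : 'M[R]_(n,q)) : \rank A = n ->
  penrose A (A^T *m invmx (A *m A^T)).
Proof.
move=> rA; have U := AAT_unit rA.
have AB : A *m (A^T *m invmx (A *m A^T)) = 1%:M by rewrite mulmxA mulmxV.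
split.
- by rewrite AB mul1mx.
- by rewrite -mulmxA AB mulmx1.
- by rewrite AB trmx1.
- rewrite !trmx_mul trmx_inv trmx_mul trmxK -!mulmxA; done.
Qed.

Lemma penrose_AB n q (A : 'M[R]_(n,q)) B : \rank A = n -> penrose A B ->
  A *m B = 1%:M.
Proof.
move=> rA [h1 h2 h3 h4].
have rAB : \rank (A *m B) = n.
  apply/eqP; rewrite eqn_leq rank_leq_row /=.
  by rewrite -{1}rA -{1}h1 mxrankM_maxl.
have U : A *m B \in unitmx by rewrite -row_free_unit /row_free rAB.
have idem : A *m B *m (A *m B) = A *m B by rewrite mulmxA h1.
by rewrite -{1}(mulKmx U (A *m B)) idem mulVmx.
Qed.

Lemma pinv_penrose n q (A : 'M[R]_(n,q)) : \rank A = n -> penrose A (pinv A).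
Proof.
move=> rA; rewrite /pinv; apply: (xgetPex 0 (P := [set B | penrose A B])).
by exists (A^T *m invmx (A *m A^T)); apply: penrose_ex.
Qed.

Lemma pinv_form n q (A : 'M[R]_(n,q)) : \rank A = n ->
  exists M, pinv A = A^T *m M /\ (A *m A^T) *m M = 1%:M.
Proof.
move=> rA; have P := pinv_penrose rA; have AB := penrose_AB rA P.
case: P => h1 h2 h3 h4.
exists ((pinv A)^T *m pinv A); split.
  by rewrite -{1}h2 -h4 trmx_mul mulmxA.
by rewrite !mulmxA -(mulmxA A A^T) -trmx_mul h4 mulmxA h1 AB.
Qed.

End Aux.

Lemma count_mod (n p i : nat) : (i < n)%N ->
  (\sum_(0 <= j < p * n) (j %% n == i) = p)%N.
Proof.
move=> ni; elim: p => [|p IH]; first by rewrite mul0n big_geq.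
rewrite mulSn addnC (@big_cat_nat _ _ _ (p * n)) ?leq_addr //= IH.
rewrite -[X in (\sum_(X <= _ < _) _)%N]add0n big_addn addKn.
under eq_bigr => j _ do rewrite addnC modnMDl.
rewrite big_mkord (bigD1 (Ordinal ni)) //= modn_small // eqxx big1 ?addn0 ?addn1 //.
move=> j h; rewrite modn_small //=.
case: eqP => // e; move: h.
have -> : j = Ordinal ni by apply: val_inj.
by rewrite eqxx.
Qed.

Section X.
Variable R : realType.
Variables n m : nat.

Definition Xmx : 'M[R]_(n, m) := \matrix_(i < n, j < m) (if (j %% n == i)%N then 1 else 0).

Lemma sum_mod (i : 'I_n) : (n %| m)%N ->
  \sum_(j < m) (if (j %% n == i)%N then 1 else 0 : R) = (m %/ n)%:R.
Proof.
move=> d.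
transitivity (\sum_(j < m) ((j %% n == i)%N : nat)%:R : R).
  by apply: eq_bigr => j _; case: ifP.
rewrite -natr_sum -(big_mkord xpredT (fun j => (j %% n == i)%N : nat)).
by rewrite -{1}(divnK d) count_mod.
Qed.

Lemma XXT : (n %| m)%N -> Xmx *m Xmx^T = (m %/ n)%:R%:M.
Proof.
move=> d; apply/matrixP => i i'; rewrite !mxE.
case: (eqVneq i i') => [<-|ne].
  rewrite mulr1n -(sum_mod i d); apply: eq_bigr => j _; rewrite !mxE.
  by case: ifP; rewrite ?mulr1 ?mulr0.
rewrite mulr0n big1 // => j _; rewrite !mxE.
case: (eqVneq (j %% n)%N i) => [e|]; last by rewrite mul0r.
case: (eqVneq (j %% n)%N i') => [e'|]; last by rewrite mulr0.
by move: ne; rewrite -(inj_eq val_inj) /= -e -e' eqxx.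
Qed.

Lemma Xcol (j : 'I_m) : (0 < n)%N -> \sum_(i < n) Xmx i j ^+ 2 = 1.
Proof.
move=> n0; have jn : (j %% n < n)%N by rewrite ltn_pmod.
rewrite (bigD1 (Ordinal jn)) //= mxE eqxx expr1n big1 ?addr0 // => i ne.
rewrite mxE; case: eqP => [e|_]; last by rewrite expr2 mulr0.
move: ne; have -> : i = Ordinal jn by apply: val_inj.
by rewrite eqxx.
Qed.

End X.

Lemma final_arith (R : realType) (a nr kr pr mr F G : R) :
  0 < a -> 0 < nr -> 0 < kr -> 0 < pr -> mr = pr * nr -> kr <= mr ->
  G = mr / pr ^+ 2 -> 2 * (nr / kr) * nr - (nr / kr) ^+ 2 * kr <= F ->
  ((mr - kr) / (kr + a ^+ 2) + 1 - kr / nr) * G <= F.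
Proof.
move=> ha hn hk hp hm hkm -> hF.
have hu : (kr + a ^+ 2)^-1 <= kr^-1.
  have hka : 0 < kr + a ^+ 2 by rewrite addr_gt0 // exprn_gt0.
  by rewrite lef_pV2 ?posrE // lerDl sqr_ge0.
have hv : kr^-1 * kr = 1 by rewrite mulVf // gt_eqF.
have hw : 0 <= kr / nr by rewrite divr_ge0 // ltW.
have hpv : pr^-1 * pr = 1 by rewrite mulVf // gt_eqF.
have hc : (mr - kr) / (kr + a ^+ 2) + 1 - kr / nr <= mr / kr.
  have h1 : (mr - kr) / (kr + a ^+ 2) <= (mr - kr) / kr.
    by rewrite ler_wpM2l // subr_ge0.
  have h2 : (mr - kr) / kr + 1 = mr / kr.
    by rewrite mulrBl mulfV ?gt_eqF // subrK.
  lra.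
have hG : 0 <= mr / pr ^+ 2.
  by rewrite hm divr_ge0 ?mulr_ge0 ?exprn_ge0 // ltW.
apply: le_trans (ler_wpM2r hG hc) _.
have -> : mr / kr * (mr / pr ^+ 2) = 2 * (nr / kr) * nr - (nr / kr) ^+ 2 * kr.
  by rewrite hm; field; rewrite !gt_eqF.
exact: hF.
Qed.

Theorem theorem4p5 (R : realType) (alpha : R) (n m k : nat) :
  0 < alpha -> (n < m)%N -> (n %| m)%N -> (2 < m %/ n)%N ->
  (n <= k)%N -> (k <= m)%N ->
  exists X : 'M[R]_(n, m),
    \rank X = n /\
    forall S : {set 'I_m}, #|S| = k -> \rank (colsubset X S) = n ->
      ((m - k)%:R / (k%:R + alpha ^+ 2) + 1 - k%:R / n%:R)
        * frob (pinv X) ^+ 2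
      <= frob (pinv (colsubset X S)) ^+ 2.
Proof.
move=> ha nm d p2 nk km.
have n0 : (0 < n)%N.
  case: (posnP n) => [e|//]; move: d nm; rewrite e dvd0n => /eqP ->.
  by [].
set p := (m %/ n)%N.
have p0 : (0 < p)%N by apply: leq_trans p2.
have mp : m = (p * n)%N by rewrite divnK.
set X := Xmx R n m.
have XX : X *m X^T = p%:R%:M := XXT R d.
have pR : (p%:R : R) != 0 by rewrite pnatr_eq0 -lt0n.
have rX : \rank X = n.
  apply/eqP; rewrite eqn_leq rank_leq_row /=.
  apply: (@mulmx1_min_rank _ n n m X 1%:M (X^T *m (p%:R^-1)%:M)).
  by rewrite mul1mx mulmxA XX -scalar_mxM mulfV.
exists X; split=> // S cS rS.
have [M [hM1 hM2]] := pinv_form rX.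
have eM : M = (p%:R^-1)%:M.
  move: hM2; rewrite XX mul_scalar_mx => h.
  have := congr1 (fun Z => (p%:R^-1 : R) *: Z) h.
  rewrite scalerA mulVf // scale1r => ->.
  by rewrite -mul_scalar_mx mulmx1.
have hG : frob (pinv X) ^+ 2 = m%:R / p%:R ^+ 2.
  rewrite /frob sqr_sqrtr; last by apply: sumr_ge0 => i _; apply: sumr_ge0 => j _; apply: sqr_ge0.
  rewrite hM1 eM mul_mx_scalar.
  transitivity (\sum_(i < m) (p%:R ^+ 2)^-1 * \sum_(j < n) X j i ^+ 2).
    apply: eq_bigr => i _; rewrite mulr_sumr; apply: eq_bigr => j _.
    by rewrite !mxE exprMn exprVn.
  under eq_bigr => i _ do rewrite Xcol //.
  by rewrite sumr_const card_ord [RHS]mulrC mulr1 mulr_natr.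
set A := colsubset X S.
set B := pinv A.
have AB : A *m B = 1%:M := penrose_AB rS (pinv_penrose rS).
have hT : \sum_(i < n) \sum_(j < #|S|) A i j * B j i = n%:R.
  have := congr1 mxtrace AB; rewrite mxtrace1 /mxtrace => <-.
  by apply: eq_bigr => i _; rewrite mxE.
have hA : \sum_(i < n) \sum_(j < #|S|) A i j ^+ 2 = k%:R.
  rewrite exchange_big /=.
  under eq_bigr => j _ do (under eq_bigr => i _ do rewrite /A /colsubset mxE; rewrite Xcol //).
  by rewrite sumr_const card_ord cS.
have hB : frob B ^+ 2 = \sum_(i < n) \sum_(j < #|S|) B j i ^+ 2.
  rewrite /frob sqr_sqrtr; last by apply: sumr_ge0 => i _; apply: sumr_ge0 => j _; apply: sqr_ge0.
  by rewrite exchange_big.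
have key : forall t : R, 2 * t * n%:R - t ^+ 2 * k%:R <= frob B ^+ 2.
  move=> t; rewrite -hT -hA hB mulr_sumr mulr_sumr -sumrB.
  apply: ler_sum => i _; rewrite mulr_sumr mulr_sumr -sumrB.
  apply: ler_sum => j _.
  have := sqr_ge0 (t * A i j - B j i); nra.
rewrite natrB //; apply: (final_arith (mr := m%:R) (pr := p%:R) ha).
- by rewrite ltr0n.
- by rewrite ltr0n (leq_trans n0 nk).
- by rewrite ltr0n.
- by rewrite mp natrM.
- by rewrite ler_nat.
- exact: hG.
- exact: key.
Qed.
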